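(* Let $K\subseteq L$ be differential fields, $r\in\mathbb{N}$, and suppose $K$ is not algebraically closed, the constant field $C$ of $K$ is not all of $K$, and $K$ is weakly $r$-differentially closed in $L$. Let $m\ge1$ and let $Q_1,\dots,Q_m\in K\{Y\}$ be nonzero differential polynomials of order $\le r$ having a common zero in $L$. Then $Q_1,\dots,Q_m$ have a common zero in $K$.
   Context: Differential fields have characteristic $0$. $K$ is weakly $r$-differentially closed in $L$ if every nonzero $P\in K\{Y\}$ of order $\le r$ having a zero in $L$ has a zero in $K$. *)

(* Defs.v *)
From HB Require Import structures.
From mathcomp Require Import all_boot all_order all_algebra.
From mathcomp Require Import mpoly.
Set Implicit Arguments. Unset Strict Implicit. Unset Printing Implicit Defensive.
Import GRing.Theory.
Local Open Scope ring_scope.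

Definition is_derivation (F : nzRingType) (D : F -> F) : Prop :=
  (forall x y, D (x + y) = D x + D y) /\
  (forall x y, D (x * y) = D x * y + x * D y).

(* Differential polynomials in one indeterminate Y of order <= r over K are
   ordinary polynomials in the r+1 variables Y, Y', ..., Y^(r):
   {mpoly K[r.+1]}, variable i standing for Y^(i). *)

Definition dvec (F : nzRingType) (D : F -> F) (r : nat) (y : F) : 'I_r.+1 -> F :=
  fun i => iter i D y.
Arguments dvec {F} D r y _.

Definition deval (F : nzRingType) (D : F -> F) (r : nat)
  (P : {mpoly F[r.+1]}) (y : F) : F := P.@[dvec D r y].
Arguments deval {F} D {r} P y.

Definition weakly_r_diff_closed (K L : fieldType) (dK : K -> K) (dL : L -> L)
  (f : {rmorphism K -> L}) (r : nat) : Prop :=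
  forall P : {mpoly K[r.+1]}, P != 0 ->
    (exists y : L, deval dL (map_mpoly f P) y = 0) ->
    exists x : K, deval dK P x = 0.

Definition alg_closed (K : fieldType) : Prop :=
  forall p : {poly K}, (1 < size p)%N -> exists x, root p x.

(* Main.v *)
From HB Require Import structures.
From mathcomp Require Import all_boot all_order all_algebra.
From mathcomp Require Import mpoly ring.
Import Order.TTheory GRing.Theory.
From Stdlib Require Import Classical.
Require Import Defs.
Local Open Scope ring_scope.
Definition comb (n : nat) (R : comNzRingType) (c : nat -> R) (d : nat) (P q : {mpoly R[n]}) :=
  \sum_(j < d.+1) c j *: (P ^+ j * q ^+ (d - j)).
Arguments comb {n R}.
Lemma meval_comb n (R : comNzRingType) (v : 'I_n -> R) (c : nat -> R) d (P q : {mpoly R[n]}) : (comb c d P q).@[v] = \sum_(j < d.+1) c j * P.@[v] ^+ j * q.@[v] ^+ (d - j).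
Proof.
rewrite /comb raddf_sum /=; apply: eq_bigr => j _.
by rewrite mevalZ mevalM !rmorphXn /= mulrA.
Qed.
Lemma map_comb n (R S : comNzRingType) (f : {rmorphism R -> S}) c d (P q : {mpoly R[n]}) : map_mpoly f (comb c d P q) = comb (f \o c) d (map_mpoly f P) (map_mpoly f q).
Proof.
rewrite /comb raddf_sum /=; apply: eq_bigr => j _.
by rewrite map_mpolyZ rmorphM !rmorphXn.
Qed.
Lemma sum00 (R : comNzRingType) (c : nat -> R) d : (0 < d)%N ->
  \sum_(j < d.+1) c j * 0 ^+ j * (0:R) ^+ (d - j) = 0.
Proof.
move=> d0; apply: big1 => j _.
case: (nat_of_ord j) (ltn_ord j) => [|k] hk; last by rewrite expr0n /= mulr0 mul0r.
by rewrite subn0 (expr0n _ d) gtn_eqF // mulr0.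
Qed.
Section F.
Variable (K : fieldType) (p : {poly K}) (hp : (1 < size p)%N) (hr : forall x, ~~ root p x).
Let d := (size p).-1.
Lemma sizep : size p = d.+1. Proof. by rewrite /d; case: (size p) hp. Qed.
Lemma pd0 : p`_d != 0.
Proof. have := lead_coef_eq0 p; rewrite lead_coefE -/d => ->. by rewrite -size_poly_eq0; case: (size p) hp. Qed.
Lemma p00 : p`_0 != 0.
Proof. have := hr 0; by rewrite /root horner_coef0. Qed.
Lemma sumS_eq0 (a b : K) : \sum_(j < d.+1) p`_j * a ^+ j * b ^+ (d - j) = 0 -> a = 0 /\ b = 0.
Proof.
have [->|b0] := eqVneq b 0.
  rewrite big_ord_recr /= big1 ?add0r; last first.
    move=> j _; rewrite expr0n subn_eq0 leqNgt ltn_ord /= mulr0 //.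
  rewrite subnn expr0 mulr1 => /eqP; rewrite mulf_eq0 (negbTE pd0) /= expf_eq0 => /andP[_ /eqP]; done.
move=> hs; exfalso; move: (hr (a / b)); rewrite /root horner_coef sizep.
have -> : \sum_(i < d.+1) p`_i * (a / b) ^+ i = b ^- d * \sum_(j < d.+1) p`_j * a ^+ j * b ^+ (d - j).
  rewrite mulr_sumr; apply: eq_bigr => j _.
  rewrite exprMn exprVn.
  have He := subnK (ltnSE (ltn_ord j)).
  rewrite -[d in b ^- d]He exprD invfM.
  have bj : b ^+ (d - j) != 0 by rewrite expf_neq0.
  have bj' : b ^+ j != 0 by rewrite expf_neq0.
  field. by rewrite bj bj'.
by rewrite hs mulr0 eqxx.
Qed.
End F.

Section M.
Variable n : nat.
Lemma ltmnS (a b : 'X_{1..n}) j : (a < b)%O -> (0 < j)%N -> ((a *+ j)%MM < (b *+ j)%MM)%O.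
Proof.
move=> ab; elim: j => // -[|j] IH _; first by rewrite !mulm1n.
by rewrite !(mulmS _ j.+1); apply: ltm_add => //; apply: IH.
Qed.
Lemma mulmnD (a : 'X_{1..n}) j k : (a *+ j + a *+ k = a *+ (j + k))%MM.
Proof. by apply/mnmP => i; rewrite mnmDE !mulmnE mulnDr. Qed.
Variable (R : idomainType).
Lemma coefG (P q : {mpoly R[n]}) j k : P != 0 -> q != 0 ->
  (P ^+ j * q ^+ k)@_(mlead P *+ j + mlead q *+ k)%MM = mleadc P ^+ j * mleadc q ^+ k.
Proof.
move=> P0 q0; rewrite -!mleadX // mleadcM !mleadX // !mleadcX //.
Qed.
Lemma leadG (P q : {mpoly R[n]}) j k : P != 0 -> q != 0 ->
  mlead (P ^+ j * q ^+ k) = (mlead P *+ j + mlead q *+ k)%MM.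
Proof.
move=> P0 q0; rewrite mleadM ?expf_neq0 // !mleadX //.
Qed.
Lemma mcoeff_comb (c : nat -> R) d (P q : {mpoly R[n]}) M : (comb c d P q)@_M = \sum_(j < d.+1) c j * (P ^+ j * q ^+ (d - j))@_M.
Proof. by rewrite /comb raddf_sum; apply: eq_bigr => j _; exact: mcoeffZ. Qed.
Lemma comb_neq0 c d (P q : {mpoly R[n]}) : P != 0 -> q != 0 -> c 0%N != 0 -> c d != 0 ->
  (forall a b : R, a != 0 -> b != 0 -> \sum_(j < d.+1) c j * a ^+ j * b ^+ (d - j) != 0) ->
  comb c d P q != 0.
Proof.
move=> P0 q0 c0 cd hS.
have lc0 : forall p : {mpoly R[n]}, p != 0 -> mleadc p != 0 by move=> p; rewrite mleadc_eq0.
case: (ltgtP (mlead P) (mlead q)) => hab.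
- apply/eqP => /(congr1 (mcoeff (mlead q *+ d)%MM)); rewrite mcoeff_comb mcoeff0.
  rewrite big_ord_recl big1 ?addr0.
    rewrite /= subn0 expr0 mul1r mleadcX => /eqP; rewrite mulf_eq0 (negbTE c0) expf_eq0 (negbTE (lc0 _ q0)) andbF //.
  move=> j _; rewrite mcoeff_gt_mlead ?mulr0 // leadG //.
  have -> : (mlead q *+ d = mlead q *+ (bump 0 j) + mlead q *+ (d - bump 0 j))%MM.
    by rewrite mulmnD subnKC //; have := ltn_ord j.
  by apply: ltmc_le_add; [apply: ltmnS | rewrite lexx].
- apply/eqP => /(congr1 (mcoeff (mlead P *+ d)%MM)); rewrite mcoeff_comb mcoeff0.
  rewrite big_ord_recr big1.
    rewrite /= subnn expr0 mulr1 add0r mleadcX => /eqP; rewrite mulf_eq0 (negbTE cd) expf_eq0 (negbTE (lc0 _ P0)) andbF //.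
  move=> j _; rewrite mcoeff_gt_mlead ?mulr0 // leadG //.
  have -> : (mlead P *+ d = mlead P *+ j + mlead P *+ (d - j))%MM.
    by rewrite mulmnD subnKC //; apply: ltnW; exact: ltn_ord.
  apply: lemc_lt_add; first by rewrite lexx.
  by apply: ltmnS => //; rewrite subn_gt0 /=; exact: ltn_ord.
- apply/eqP => /(congr1 (mcoeff (mlead P *+ d)%MM)); rewrite mcoeff_comb mcoeff0.
  have -> : \sum_(j < d.+1) c j * (P ^+ j * q ^+ (d - j))@_(mlead P *+ d)%MM
      = \sum_(j < d.+1) c j * mleadc P ^+ j * mleadc q ^+ (d - j).
    apply: eq_bigr => j _; rewrite -mulrA -coefG // -hab mulmnD subnKC //.
    by rewrite -ltnS.
  by apply/eqP; apply: hS; apply: lc0.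
Qed.
End M.

Section Seq.
Variables (K L : fieldType) (f : {rmorphism K -> L}) (n : nat).
Variable (p : {poly K}) (hp : (1 < size p)%N) (hr : forall x, ~~ root p x).
Let d := (size p).-1.
Let c := fun j : nat => p`_j.

Lemma d_gt0 : (0 < d)%N.
Proof. by rewrite /d; case: (size p) hp => // -[|k]. Qed.

Lemma combine_seq (s : seq {mpoly K[n]}) : s != [::] -> all (fun P => P != 0) s ->
  exists R : {mpoly K[n]}, [/\ R != 0,
    (forall v, R.@[v] = 0 -> forall P, P \in s -> P.@[v] = 0) &
    (forall w : 'I_n -> L, (forall P, P \in s -> (map_mpoly f P).@[w] = 0) ->
        (map_mpoly f R).@[w] = 0)].
Proof.
elim: s => // x s IH _ /= /andP[x0 hs].
have [->|sn] := eqVneq s [::].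
  exists x; split => //.
    by move=> v hv P; rewrite inE => /eqP ->.
  by move=> w hw; apply: hw; rewrite inE eqxx.
have [R [R0 hK hL]] := IH sn hs.
exists (comb c d x R); split.
- apply: comb_neq0 => //.
  + by have := @p00 _ _ hr.
  + by have := @pd0 _ _ hp.
  + move=> a b a0 b0; apply/eqP => /(@sumS_eq0 _ _ hp hr) [/eqP]; by rewrite (negbTE a0).
- move=> v; rewrite meval_comb => /(@sumS_eq0 _ _ hp hr) [h1 h2] P; rewrite inE => /orP[/eqP -> //|].
  by apply: hK.
- move=> w hw; rewrite map_comb meval_comb.
  rewrite hw ?inE ?eqxx // hL; last by move=> P hP; apply: hw; rewrite inE hP orbT.
  exact: sum00 d_gt0.
Qed.
End Seq.

Theorem mainTheorem18
  (K L : fieldType) (dK : K -> K) (dL : L -> L)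
  (hdK : is_derivation dK) (hdL : is_derivation dL)
  (hcharK : [pchar K] =i pred0) (hcharL : [pchar L] =i pred0)
  (f : {rmorphism K -> L}) (hf : forall x, f (dK x) = dL (f x))
  (r : nat)
  (hnac : ~ alg_closed K)
  (hC : exists a : K, dK a != 0)
  (hwc : weakly_r_diff_closed dK dL f r)
  (m : nat) (hm : (0 < m)%N) (Q : 'I_m -> {mpoly K[r.+1]})
  (hQ : forall i, Q i != 0)
  (hzero : exists y : L, forall i, deval dL (map_mpoly f (Q i)) y = 0) :
  exists x : K, forall i, deval dK (Q i) x = 0.
Proof.
have [p [hp hr]] : exists p : {poly K}, (1 < size p)%N /\ forall x, ~~ root p x.
  apply: NNPP => hn; apply: hnac => p hp.
  apply: NNPP => hx; apply: hn; exists p; split => // x; apply/negP => hx'.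
  by apply: hx; exists x.
set s := [seq Q i | i <- enum 'I_m].
have sn : s != [::].
  by rewrite /s; case: m hm Q {hQ hzero s} => // k _ Q0; rewrite enum_ordSl.
have hs : all (fun P => P != 0) s by apply/allP => P /mapP [i _ ->].
have [R [R0 hK hL]] := @combine_seq _ _ f _ _ hp hr _ sn hs.
have [y hy] := hzero.
have [x hx] : exists x : K, deval dK R x = 0.
  apply: hwc => //; exists y; apply: hL => P /mapP [i _ ->]; exact: hy.
exists x => i; apply: hK hx _ _.
by apply/mapP; exists i; rewrite ?mem_enum.
Qed.
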